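(* Let $n>1$ be odd, and let $R\subseteq (A_n)^{3n}$ be the set of all tuples $((1,x_1),(2,x_2),\dots,(n,x_n),(1,x_{n+1}),\dots,(n,x_{2n}),(1,x_{2n+1}),\dots,(n,x_{3n}))$ (i.e. the $j$-th entry is $(((j-1)\bmod n)+1,\,x_j)$) with $x_j\in\{0,1,2,3\}$ such that $x_{kn+1}\equiv x_{kn+2}\equiv\dots\equiv x_{kn+n}\pmod 2$ for each $k=0,1,2$, and $\sum_{i=1}^{3n}x_i\equiv 2\pmod 4$. Then $R$ is a subuniverse of $(\mathbf{A}_n)^{3n}$, i.e. it is closed under coordinatewise application of each $t_i$.
   Context: Let $[n]=\{1,\dots,n\}$ and let $m$ be the minority operation on $[n]$ given by $m(x,y,z)=x$ if $y=z$, $m(x,y,z)=y$ if $x=z$, and $m(x,y,z)=z$ otherwise. On $\{0,1,2,3\}$, $+,-$ denote arithmetic modulo 4 and $\oplus$ denotes bitwise XOR of 2-bit binary representations. Let $A_n=[n]\times\{0,1,2,3\}$. For $i\in[n]$ define the ternary operation $t_i$ on $A_n$ by $t_i((a_1,b_1),(a_2,b_2),(a_3,b_3))=(i,\,b_1-b_2+b_3)$ if $a_1=a_2=a_3=i$, and $=(m(a_1,a_2,a_3),\,b_1\oplus b_2\oplus b_3)$ otherwise. The algebra $\mathbf{A}_n$ has universe $A_n$ and basic operations $t_1,\dots,t_n$. *)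

(* Defs.v *)
From mathcomp Require Import all_boot.
Set Implicit Arguments. Unset Strict Implicit. Unset Printing Implicit Defensive.

Definition minority (x y z : nat) : nat :=
  if y == z then x else if x == z then y else z.

Definition mod4 (m : nat) : 'I_4 := Ordinal (ltn_pmod m (isT : 0 < 4)).
Definition sub4 (b1 b2 b3 : 'I_4) : 'I_4 :=
  mod4 (b1 + (4 - b2) + b3).
Definition xor4 (b1 b2 b3 : 'I_4) : 'I_4 :=
  mod4 (Nat.lxor (Nat.lxor b1 b2) b3).

Definition elt := (nat * 'I_4)%type.
Definition inA (n : nat) (x : elt) : bool := (1 <= x.1 <= n).

Definition t_op (i : nat) (x y z : elt) : elt :=
  if [&& x.1 == i, y.1 == i & z.1 == i] then (i, sub4 x.2 y.2 z.2)
  else (minority x.1 y.1 z.1, xor4 x.2 y.2 z.2).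

(* The relation R ⊆ (A_n)^{3n}; tuples indexed by j : 'I_(3n) (0-based),
   the j-th entry (0-based) has first component (j mod n) + 1. *)
Definition inR (n : nat) (r : 'I_(3 * n) -> elt) : bool :=
  [&& [forall j : 'I_(3 * n), (r j).1 == (j %% n).+1],
      [forall j : 'I_(3 * n), forall k : 'I_(3 * n),
          (j %/ n == k %/ n) ==> (odd (r j).2 == odd (r k).2)]
    & (\sum_(j < 3 * n) nat_of_ord (r j).2) %% 4 == 2].

Arguments inR : clear implicits.

(* Main.v *)
Require Import Defs.
From mathcomp Require Import all_boot zify.

Definition carry (a b c : bool) : nat := ((b && ~~a && ~~c) || (a && c && ~~b)).

Lemma xor4_mod (x y z : 'I_4) :
  (xor4 x y z + 2 * carry (odd x) (odd y) (odd z)) %% 4 = (x + 3*y + z) %% 4.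
Proof.
by case: x => [[|[|[|[|x]]]] Hx] //; case: y => [[|[|[|[|y]]]] Hy] //;
   case: z => [[|[|[|[|z]]]] Hz].
Qed.
Lemma sub4_mod (x y z : 'I_4) : (sub4 x y z) %% 4 = (x + 3*y + z) %% 4.
Proof.
by case: x => [[|[|[|[|x]]]] Hx] //; case: y => [[|[|[|[|y]]]] Hy] //;
   case: z => [[|[|[|[|z]]]] Hz].
Qed.
Lemma xor4_odd (x y z : 'I_4) : odd (xor4 x y z) = odd x (+) odd y (+) odd z.
Proof.
by case: x => [[|[|[|[|x]]]] Hx] //; case: y => [[|[|[|[|y]]]] Hy] //;
   case: z => [[|[|[|[|z]]]] Hz].
Qed.
Lemma sub4_odd (x y z : 'I_4) : odd (sub4 x y z) = odd x (+) odd y (+) odd z.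
Proof.
by case: x => [[|[|[|[|x]]]] Hx] //; case: y => [[|[|[|[|y]]]] Hy] //;
   case: z => [[|[|[|[|z]]]] Hz].
Qed.

Lemma count_ne (i : nat) (hi : 1 <= i) (n : nat) :
  \sum_(0 <= m < n) (m.+1 != i : nat) = n - (i <= n).
Proof.
elim: n => [|n IH]; first by rewrite big_nil; case: i hi.
rewrite big_nat_recr //= IH.
case: (ltngtP n.+1 i) => H.
- have h1 : (i <= n) = false by apply/negbTE; rewrite -ltnNge ltnW.
  rewrite h1 /=; lia.
- have h1 : (i <= n) by [].
  rewrite h1 /=; lia.
- subst i; rewrite ltnn /=; lia.
Qed.

Lemma sum_mod4 (I : finType) (a b : I -> nat) :
  (forall j, a j %% 4 = b j %% 4) -> (\sum_j a j) %% 4 = (\sum_j b j) %% 4.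
Proof.
move=> H; apply: (big_ind2 (fun x y => x %% 4 = y %% 4)) => //.
by move=> x1 x2 y1 y2 E1 E2; rewrite -modnDm E1 E2 modnDm.
Qed.

Lemma sum_even (n : nat) (hn : 0 < n) (hodd : odd n) (i : nat) (hi : 1 <= i <= n)
  (P : 'I_(3 * n) -> nat)
  (hP : forall j k : 'I_(3 * n), j %/ n = k %/ n -> P j = P k) :
  ~~ odd (\sum_(j < 3 * n) P j * ((j %% n).+1 != i)).
Proof.
have h3 : 0 < 3 * n by rewrite muln_gt0.
set j0 : 'I_(3 * n) := Ordinal h3.
set G := fun j : nat => P (insubd j0 j) * ((j %% n).+1 != i).
have -> : \sum_(j < 3 * n) P j * ((j %% n).+1 != i) = \sum_(0 <= j < 3 * n) G j.
  by rewrite big_mkord; apply: eq_bigr => j _; rewrite /G valKd.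
have blk : forall k, k < 3 ->
   \sum_(k * n <= j < k * n + n) G j = P (insubd j0 (k * n)) * (n - 1).
  move=> k hk.
  rewrite -{1}[k * n]add0n big_addn addnC addnK.
  have -> : n - 1 = \sum_(0 <= m < n) (m.+1 != i : nat).
    rewrite count_ne; last by case/andP: hi.
    by case/andP: hi => _ ->.
  rewrite big_distrr /=; apply: eq_big_nat => m /andP[_ hm].
  rewrite /G.
  have -> : (m + k * n) %% n = m by rewrite addnC modnMDl modn_small.
  congr (_ * _); apply: hP.
  have hk1 : m + k * n < 3 * n.
    have : k.+1 * n <= 3 * n by rewrite leq_mul2r hk orbT.
    rewrite mulSn.
    lia.
  have hk2 : k * n < 3 * n by lia.
  rewrite !val_insubd hk1 hk2 divnDMl // mulnK // divn_small //.
rewrite (big_cat_nat (n := n)) /=; [|lia|lia].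
rewrite (big_cat_nat (n := 2 * n) (m := n)) /=; [|lia|lia].
have := blk 0 isT; rewrite mul0n add0n => ->.
have := blk 1 isT; rewrite mul1n => e1.
have e2 := blk 2 isT.
have -> : \sum_(2 * n <= j < 3 * n) G j = \sum_(2 * n <= j < 2 * n + n) G j.
  by rewrite (_ : 3 * n = 2 * n + n) //; lia.
rewrite e2.
have -> : \sum_(n <= j < 2 * n) G j = \sum_(n <= j < n + n) G j.
  by rewrite (_ : 2 * n = n + n) //; lia.
rewrite e1.
rewrite !oddD !oddM.
have : ~~ odd (n - 1) by case: n hn hodd {hi j0 G blk e1 e2 P hP h3} => //= n _; rewrite subn1.
by move/negbTE => ->; rewrite !andbF.
Qed.

Theorem mainTheorem7 (n : nat) (hn : 1 < n) (hodd : odd n)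
    (i : nat) (hi : 1 <= i <= n)
    (r1 r2 r3 : 'I_(3 * n) -> elt) :
  inR n r1 -> inR n r2 -> inR n r3 ->
  inR n (fun j => t_op i (r1 j) (r2 j) (r3 j)).
Proof.
move=> /and3P[/forallP f1 /forallP p1 /eqP s1] /and3P[/forallP f2 /forallP p2 /eqP s2]
  /and3P[/forallP f3 /forallP p3 /eqP s3].
have e1 j : (r1 j).1 = (j %% n).+1 := eqP (f1 j).
have e2 j : (r2 j).1 = (j %% n).+1 := eqP (f2 j).
have e3 j : (r3 j).1 = (j %% n).+1 := eqP (f3 j).
have cond j : [&& (r1 j).1 == i, (r2 j).1 == i & (r3 j).1 == i] = ((j %% n).+1 == i).
  by rewrite e1 e2 e3 !andbb.
have rodd j : odd (t_op i (r1 j) (r2 j) (r3 j)).2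
   = odd (r1 j).2 (+) odd (r2 j).2 (+) odd (r3 j).2.
  by rewrite /t_op; case: ifP => _ /=; [exact: sub4_odd | exact: xor4_odd].
have pp (p : 'I_(3 * n) -> bool) :
    (forall j : 'I_(3 * n), [forall k : 'I_(3 * n), (j %/ n == k %/ n) ==> (p j == p k)]) ->
    forall j k : 'I_(3 * n), j %/ n = k %/ n -> p j = p k.
  move=> H j k hjk; have := forallP (H j) k; rewrite hjk eqxx /=; exact/eqP.
have q1 := pp (fun j => odd (r1 j).2) p1.
have q2 := pp (fun j => odd (r2 j).2) p2.
have q3 := pp (fun j => odd (r3 j).2) p3.
apply/and3P; split.
- apply/forallP => j; rewrite /t_op cond; case: ifP => /eqP h /=.
    by rewrite h.
  by rewrite /minority e1 e2 e3 eqxx.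
- apply/forallP => j; apply/forallP => k; apply/implyP => /eqP hjk.
  by rewrite !rodd (q1 _ _ hjk) (q2 _ _ hjk) (q3 _ _ hjk).
set c := fun j : 'I_(3 * n) => carry (odd (r1 j).2) (odd (r2 j).2) (odd (r3 j).2).
have key : (\sum_(j < 3 * n) (nat_of_ord (t_op i (r1 j) (r2 j) (r3 j)).2 +
                2 * (c j * ((j %% n).+1 != i)))) %% 4 = 2.
  rewrite (@sum_mod4 _ _ (fun j => nat_of_ord (r1 j).2 + 3 * (r2 j).2 + (r3 j).2)).
    have E : \sum_(j < 3 * n) (nat_of_ord (r1 j).2 + 3 * (r2 j).2 + (r3 j).2) = \sum_(j < 3 * n) nat_of_ord (r1 j).2 + 3 * \sum_(j < 3 * n) nat_of_ord (r2 j).2 + \sum_(j < 3 * n) nat_of_ord (r3 j).2.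
      by rewrite big_split big_split big_distrr.
    rewrite E; lia.
  move=> j; rewrite /t_op cond; case: ifP => h /=.
    by rewrite muln0 addn0 sub4_mod.
  by rewrite muln1 xor4_mod.
have hc : forall j k : 'I_(3 * n), j %/ n = k %/ n -> c j = c k.
  by move=> j k h; rewrite /c (q1 _ _ h) (q2 _ _ h) (q3 _ _ h).
have ev := @sum_even n (ltnW hn) hodd i hi c hc.
move: key; rewrite big_split /= -big_distrr /=.
move: ev; set T := \sum_(j < 3 * n) _.
move=> ev key; apply/eqP.
have := odd_double_half T; rewrite (negbTE ev) add0n => hT.
rewrite -hT -mul2n in key; lia.
Qed.
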